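(* Let $N\ge 1$ and let $A\subset\Gamma=\mathbb N_0^s$ satisfy \[ A\supseteq \bigcup_{j=1}^N\ \bigcup_{B\in L_j(\Gamma)} B , \] i.e. $A$ contains every lower set of cardinality at most $N$. Then $A$ is a monomial degree reducing universal interpolation set of order $N$.
   Context: $\Pi=\mathbb C[x_1,\dots,x_s]$, $\deg$ is total degree with $\deg 0<0$. For $A\subset\Gamma=\mathbb N_0^s$, $\Pi_A$ is the span of the monomials $x^\alpha$, $\alpha\in A$. A subspace $\mathcal P\subseteq\Pi$ is a degree reducing universal interpolation space of order $N$ if for every finite $X\subset\mathbb C^s$ with $\#X\le N$ and every $q\in\Pi$ there is $p\in\mathcal P$ with $p|_X=q|_X$ and $\deg p\le\deg q$. A set $A\subset\Gamma$ is a monomial degree reducing universal interpolation set of order $N$ if $\Pi_A$ is a degree reducing universal interpolation space of order $N$. For $\alpha,\beta\in\Gamma$, $\alpha\le\beta$ means $\alpha_j\le\beta_j$ for all $j$; $B\subset\Gamma$ is a lower set if $\alpha\in B$ and $\beta\le\alpha$ imply $\beta\in B$; $L_j(\Gamma)$ denotes the set of lower sets of cardinality $j$. *)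

(* Defs.v *)
From mathcomp Require Import all_boot all_algebra.
From mathcomp Require Import reals complex finmap mpoly.
Set Implicit Arguments. Unset Strict Implicit. Unset Printing Implicit Defensive.
Import GRing.Theory.
Local Open Scope ring_scope.

(* Gamma = N_0^s is the type of multinomials 'X_{1..s}.
   C is modelled as R[i] for an arbitrary R : realType (any realType is
   isomorphic to the real numbers, so R[i] is the complex field). *)

Definition mle (s : nat) (a b : 'X_{1..s}) : Prop := forall i : 'I_s, (a i <= b i)%N.

Definition lower_set (s : nat) (B : {fset 'X_{1..s}}) : Prop :=
  forall a b : 'X_{1..s}, a \in B -> mle b a -> b \in B.

Definition PiA (R : realType) (s : nat) (A : 'X_{1..s} -> Prop)
  (p : {mpoly R[i][s]}) : Prop :=
  forall m, m \in msupp p -> A m.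

Definition evalpt (R : realType) (s : nat) (p : {mpoly R[i][s]}) (x : 'rV[R[i]]_s) : R[i] :=
  p.@[fun j => x ord0 j].

(* total degree comparison with deg 0 < 0: msize p = deg p + 1 for p <> 0,
   msize 0 = 0, so deg p <= deg q  <->  msize p <= msize q. *)
Definition deg_le (R : realType) (s : nat) (p q : {mpoly R[i][s]}) : Prop :=
  (msize p <= msize q)%N.

Definition dr_univ_interp_space (R : realType) (s N : nat)
  (P : {mpoly R[i][s]} -> Prop) : Prop :=
  forall (X : seq 'rV[R[i]]_s), uniq X -> (size X <= N)%N ->
  forall q : {mpoly R[i][s]},
  exists p : {mpoly R[i][s]},
    [/\ P p, (forall x, x \in X -> evalpt p x = evalpt q x) & deg_le p q].

Definition monomial_dr_univ_interp_set (R : realType) (s N : nat)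
  (A : 'X_{1..s} -> Prop) : Prop :=
  @dr_univ_interp_space R s N (@PiA R s A).

(* Main.v *)
Require Import Defs.
From mathcomp Require Import all_boot all_order all_algebra.
From mathcomp Require Import reals complex finmap mpoly.
From Stdlib Require Import Classical ClassicalEpsilon.
Set Implicit Arguments. Unset Strict Implicit. Unset Printing Implicit Defensive.
Import GRing.Theory Order.TTheory.
Local Open Scope ring_scope.

Definition agree (R : realType) (s : nat) (X : seq 'rV[R[i]]_s)
  (p q : {mpoly R[i][s]}) : Prop := forall x, x \in X -> evalpt p x = evalpt q x.

Definition Supp (R : realType) (s : nat) (S : 'X_{1..s} -> Prop)
  (p : {mpoly R[i][s]}) : Prop := forall m, ~ S m -> p@_m = 0.

Lemma agree_refl (R : realType) (s : nat) X p : @agree R s X p p.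
Proof. by []. Qed.

Lemma agree_sym (R : realType) (s : nat) X p q : @agree R s X p q -> agree X q p.
Proof. by move=> h x hx; rewrite h. Qed.

Lemma agree_trans (R : realType) (s : nat) X p q r : @agree R s X p q -> agree X q r -> agree X p r.
Proof. by move=> h1 h2 x hx; rewrite h1 // h2. Qed.

Lemma agreeD (R : realType) (s : nat) X p1 p2 q1 q2 : @agree R s X p1 q1 -> agree X p2 q2 ->
  agree X (p1 + p2) (q1 + q2).
Proof. by move=> h1 h2 x hx; rewrite /evalpt !mevalD -!/(evalpt _ _) h1 ?h2. Qed.

Lemma agreeZ (R : realType) (s : nat) X c p q : @agree R s X p q -> agree X (c *: p) (c *: q).
Proof. by move=> h x hx; rewrite /evalpt !mevalZ -!/(evalpt _ _) h. Qed.

Lemma agreeMr (R : realType) (s : nat) X p q r : @agree R s X p q -> agree X (p * r) (q * r).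
Proof. by move=> h x hx; rewrite /evalpt !mevalM -!/(evalpt _ _) h. Qed.

Lemma Supp0 (R : realType) (s : nat) S : @Supp R s S 0.
Proof. by move=> m _; rewrite mcoeff0. Qed.

Lemma SuppD (R : realType) (s : nat) S p q : @Supp R s S p -> Supp S q -> Supp S (p + q).
Proof. by move=> h1 h2 m hm; rewrite mcoeffD h1 ?h2 ?addr0. Qed.

Lemma SuppZ (R : realType) (s : nat) S c p : @Supp R s S p -> Supp S (c *: p).
Proof. by move=> h m hm; rewrite mcoeffZ h ?mulr0. Qed.

Lemma SuppX (R : realType) (s : nat) (S : 'X_{1..s} -> Prop) m : S m -> @Supp R s S 'X_[m].
Proof.
move=> hS m' hm'; rewrite mcoeffX; case: eqP => // e.
by case: hm'; rewrite -e.
Qed.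

Lemma Supp_sum (R : realType) (s : nat) (S : 'X_{1..s} -> Prop) (I : eqType) (r : seq I) (F : I -> {mpoly R[i][s]}) :
  (forall j, j \in r -> Supp S (F j)) -> Supp S (\sum_(j <- r) F j).
Proof.
elim: r => [|a r IH] h; first by rewrite big_nil; apply: Supp0.
rewrite big_cons; apply: SuppD; first by apply: h; rewrite mem_head.
by apply: IH => j hj; apply: h; rewrite inE hj orbT.
Qed.

Lemma Supp_mono (R : realType) (s : nat) (S S' : 'X_{1..s} -> Prop) p :
  (forall m, S m -> S' m) -> @Supp R s S p -> Supp S' p.
Proof. by move=> hS h m hm; apply: h => /hS. Qed.

Lemma Supp_msupp (R : realType) (s : nat) S p m : @Supp R s S p -> m \in msupp p -> S m.
Proof.
move=> h hm; apply: NNPP => hn; move: hm; rewrite mcoeff_msupp h //.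
by rewrite eqxx.
Qed.

Lemma expand (R : realType) (s : nat) X (S : 'X_{1..s} -> Prop) (r : seq 'X_{1..s}) (c : 'X_{1..s} -> R[i]) :
  (forall m, m \in r -> exists pm, Supp S pm /\ agree X 'X_[m] pm) ->
  exists p, Supp S p /\ @agree R s X (\sum_(m <- r) c m *: 'X_[m]) p.
Proof.
elim: r => [|a r IH] h.
  by exists 0; split; [apply: Supp0 | rewrite big_nil].
have [p [hp1 hp2]] : exists p, Supp S p /\ agree X (\sum_(m <- r) c m *: 'X_[m]) p.
  by apply: IH => m hm; apply: h; rewrite inE hm orbT.
have [pa [ha1 ha2]] := h a (mem_head _ _).
exists (c a *: pa + p); split; first by apply: SuppD => //; apply: SuppZ.
by rewrite big_cons; apply: agreeD => //; apply: agreeZ.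
Qed.

Definition red (R : realType) (s : nat) (X : seq 'rV[R[i]]_s) (m : 'X_{1..s}) : Prop :=
  exists p, Supp (fun m' => (m' < m)%O) p /\ agree X 'X_[m] p.

Lemma L1 (R : realType) (s : nat) (X : seq 'rV[R[i]]_s) m :
  exists pm, Supp (fun b => ~ red X b /\ (b <= m)%O) pm /\ agree X 'X_[m] pm.
Proof.
move: m; apply: (well_founded_ind ltom_wf) => m IH.
case: (classic (red X m)) => [[p [hp1 hp2]] | hn].
  have H : forall m', m' \in msupp p -> exists pm,
      Supp (fun b => ~ red X b /\ (b <= m)%O) pm /\ agree X 'X_[m'] pm.
    move=> m' hm'; have lt : (m' < m)%O := Supp_msupp hp1 hm'.
    have [pm [a b]] := IH m' lt; exists pm; split => //.
    apply: Supp_mono a => b' [h1 h2]; split => //; exact: le_trans h2 (ltW lt).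
  have [p2 [h1 h2]] := @expand R s X _ (msupp p) (fun m' => p@_m') H.
  exists p2; split => //; apply: agree_trans hp2 _; rewrite {1}(mpolyE p); exact: h2.
exists 'X_[m]; split; last by [].
by apply: SuppX; split.
Qed.

Lemma lower (R : realType) (s : nat) (X : seq 'rV[R[i]]_s) a b :
  ~ red X a -> (b <= a)%MM -> ~ red X b.
Proof.
move=> ha hba [p [hp1 hp2]]; apply: ha.
set k := (a - b)%MM.
have eA : a = (k + b)%MM by rewrite /k submK.
exists (p * 'X_[k]); split.
  rewrite (mpolyE p) mulr_suml; apply: Supp_sum => m hm.
  rewrite -scalerAl -mpolyXD; apply: SuppZ; apply: SuppX.
  by rewrite eA [(k + b)%MM]addmC ltmc_add2l; exact: (Supp_msupp hp1 hm).
rewrite eA mpolyXD mulrC; exact: agreeMr.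
Qed.

Lemma indep (R : realType) (s : nat) (X : seq 'rV[R[i]]_s) p :
  Supp (fun b => ~ red X b) p -> agree X p 0 -> p = 0.
Proof.
move=> hs ha; apply: NNPP => /eqP hp0.
have hb0 := mlead_supp hp0.
apply: (Supp_msupp hs hb0).
set b0 := mlead p in hb0 *.
set c := p@_b0.
have hc : c != 0 by rewrite /c -mcoeff_msupp.
exists (- c^-1 *: (p - c *: 'X_[b0])); split.
  move=> m hm; rewrite mcoeffZ mcoeffB mcoeffZ mcoeffX.
  case: (eqVneq b0 m) => [<-|hne]; first by rewrite mulr1 subrr mulr0.
  have hle : (b0 <= m)%O by rewrite leNgt; apply/negP.
  have hlt : (b0 < m)%O by rewrite lt_neqAle hle andbT.
  have hlt2 : (b0 < m)%O by rewrite lt_neqAle hle andbT; exact: hne.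
  by rewrite mcoeff_gt_mlead // mulr0 subrr mulr0.
move=> x hx; have := ha x hx; rewrite /evalpt mevalZ mevalB mevalZ meval0 => ->.
by rewrite sub0r mulrN mulNr opprK mulrA mulVf // mul1r.
Qed.

Lemma card_le (R : realType) (s : nat) (X : seq 'rV[R[i]]_s) (B : {fset 'X_{1..s}}) :
  (forall b, b \in B -> ~ red X b) -> (#|` B| <= size X)%N.
Proof.
move=> hB.
set k := #|` B|; set n := size X.
set e : seq 'X_{1..s} := B.
have ue : uniq e := fset_uniq B.
have se : size e = k by [].
rewrite leqNgt; apply/negP => hnk.
pose M : 'M[R[i]]_(k, n) := \matrix_(a, j) evalpt 'X_[nth 0%MM e a] (nth 0 X j).
have hr : (\rank M < k)%N := leq_ltn_trans (rank_leq_col M) hnk.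
have hK : kermx M != 0 by rewrite kermx_eq0 /row_free neq_ltn hr.
have [a [j hj]] : exists a j, kermx M a j != 0.
  apply: NNPP => hn; move/eqP: hK; apply; apply/matrixP => a j.
  apply: NNPP => h; apply: hn; exists a; exists j; apply/eqP => he; apply: h; by rewrite he mxE.
pose v : 'rV_k := row a (kermx M).
have hvM : v *m M = 0 by rewrite /v -row_mul mulmx_ker row0.
pose p := \sum_(t < k) v 0 t *: 'X_[nth 0%MM e t].
have hp : p = 0.
  apply: (indep (X := X)).
    apply: Supp_sum => t _; apply: SuppZ; apply: SuppX; apply: hB.
    by rewrite mem_nth // se.
  move=> x hx; rewrite /evalpt meval0 raddf_sum /=.
  have hxi : (index x X < n)%N by rewrite index_mem.
  transitivity ((v *m M) 0 (Ordinal hxi)); last by rewrite hvM mxE.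
  rewrite mxE; apply: eq_bigr => t _; rewrite mevalZ !mxE /= nth_index //.
have := congr1 (mcoeff (nth 0%MM e j)) hp; rewrite mcoeff0 raddf_sum /=.
rewrite (bigD1 j) //= big1 ?addr0.
  by rewrite mcoeffZ mcoeffX eqxx mulr1 /v mxE => hz; move: hj; rewrite hz eqxx.
move=> t htj; rewrite mcoeffZ mcoeffX nth_uniq ?se //.
by have /negbTE -> : (t : nat) != j by []; rewrite mulr0.
Qed.

Definition inBb (R : realType) (s : nat) (X : seq 'rV[R[i]]_s) (m : 'X_{1..s}) : bool :=
  if excluded_middle_informative (~ red X m) then true else false.

Lemma inBbP (R : realType) (s : nat) (X : seq 'rV[R[i]]_s) m : inBb X m <-> ~ red X m.
Proof. by rewrite /inBb; case: excluded_middle_informative. Qed.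

Definition Bd (R : realType) (s : nat) (X : seq 'rV[R[i]]_s) (d : nat) : {fset 'X_{1..s}} :=
  seq_fset tt [seq m <- [seq bmnm b | b <- enum {: bmultinom s d}] | inBb X m].

Lemma memBd (R : realType) (s : nat) (X : seq 'rV[R[i]]_s) d m :
  m \in Bd X d <-> (~ red X m /\ (mdeg m < d)%N).
Proof.
rewrite seq_fsetE mem_filter; split.
  move/andP => [h1 h2]; split; first exact/inBbP. case/mapP: h2 => b _ ->; exact: bmdeg.
move=> [h1 h2]; apply/andP; split; first exact/inBbP.
by apply/mapP; exists (BMultinom h2); rewrite ?mem_enum.
Qed.

Theorem proposition19 (R : realType) (s N : nat) (A : 'X_{1..s} -> Prop) :
  (1 <= N)%N ->
  (forall j : nat, (1 <= j <= N)%N ->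
     forall B : {fset 'X_{1..s}}, lower_set B -> #|` B| = j ->
     forall m, m \in B -> A m) ->
  @monomial_dr_univ_interp_set R s N A.
Proof.
move=> N1 hA X Xu XN q.
set d := msize q.
have H : forall m, m \in msupp q -> exists pm,
    Supp (fun b => ~ red X b /\ (mdeg b < d)%N) pm /\ agree X 'X_[m] pm.
  move=> m hm; have [pm [a b]] := L1 X m; exists pm; split => //.
  apply: Supp_mono a => b' [h1 h2]; split => //.
  exact: leq_ltn_trans (lemc_mdeg h2) (msize_mdeg_lt hm).
have [p [hp1 hp2]] := @expand R s X _ (msupp q) (fun m => q@_m) H.
exists p; split.
- move=> m hm; have [h1 h2] := Supp_msupp hp1 hm.
  have mB : m \in Bd X d by apply/memBd.
  refine (hA #|` Bd X d| _ (Bd X d) _ erefl m mB).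
    apply/andP; split; last exact: leq_trans (card_le (fun b hb => proj1 (iffLR (memBd X d b) hb))) XN.
    by rewrite cardfs_gt0; apply/eqP => e0; move: mB; rewrite e0 inE.
  move=> a b ha hba; have [ra da] := iffLR (memBd X d a) ha.
  have hmm : (b <= a)%MM by apply/mnm_lepP.
  apply/memBd; split; first exact: lower ra hmm.
  exact: leq_ltn_trans (lemc_mdeg (lem_leo hmm)) da.
- by move=> x hx; rewrite -(hp2 x hx) -mpolyE.
- rewrite /deg_le; case: (eqVneq p 0) => [->|hp0]; first by rewrite msize0.
  rewrite -(mlead_deg hp0); have [_ h] := Supp_msupp hp1 (mlead_supp hp0); exact: h.
Qed.
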